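(* Let $G$ be an oriented graph and let $a,b$ be positive integers. Then $\chi^*_o(G) \leq \frac{a}{b}$ if and only if there exist a positive integer $c$ and a consistent sub-orientation $\overrightarrow{KG}_{ac,bc}$ of the Kneser graph $KG_{ac,bc}$ such that $G$ admits a homomorphism to $\overrightarrow{KG}_{ac,bc}$.
   Context: An oriented graph is a finite directed graph with no directed cycle of length 1 or 2. For a set $S$ of $k$ colors let $P_b(S)$ be the set of $b$-element subsets of $S$. A $b$-fold oriented $k$-coloring of an oriented graph $G$ is a map $f: V(G) \to P_b(S)$ with $|S|=k$ such that (i) $f(x)\cap f(y)=\emptyset$ for every arc $xy$, and (ii) for all arcs $xy, zw$, $f(x)\cap f(w)\neq\emptyset$ implies $f(y)\cap f(z)=\emptyset$. The $b$-fold oriented chromatic number $\chi^b_o(G)$ is the minimum $k$ such that $G$ admits a $b$-fold oriented $k$-coloring, and the fractional oriented chromatic number is $\chi^*_o(G)=\lim_{b\to\infty}\chi^b_o(G)/b=\inf_{b\geq 1}\chi^b_o(G)/b$. A homomorphism of an oriented graph $G$ to an oriented graph $H$ is a map $f:V(G)\to V(H)$ such that $f(x)f(y)$ is an arc of $H$ whenever $xy$ is an arc of $G$. The Kneser graph $KG_{a,b}$ has the $b$-subsets of an $a$-set as vertices, two being adjacent iff they are disjoint. A consistent sub-orientation of $KG_{a,b}$ is an oriented graph $\overrightarrow{KG}_{a,b}$ whose underlying graph is a subgraph of $KG_{a,b}$ and such that for any two arcs $xy$ and $wz$, $x\cap z\neq\emptyset$ implies $y\cap w=\emptyset$. *)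

(* Defs.v *)
From HB Require Import structures.
From mathcomp Require Import all_boot all_order all_algebra.
From mathcomp Require Import boolp classical_sets reals.
Set Implicit Arguments. Unset Strict Implicit. Unset Printing Implicit Defensive.
Import Order.TTheory GRing.Theory Num.Theory.

Definition oriented (V : finType) (arc : rel V) : Prop :=
  (forall x, ~~ arc x x) /\ (forall x y, arc x y -> ~~ arc y x).

Definition is_bfold_ocoloring (V : finType) (arc : rel V) (b k : nat)
  (f : V -> {set 'I_k}) : Prop :=
  [/\ (forall x, #|f x| = b),
      (forall x y, arc x y -> [disjoint f x & f y]) &
      (forall x y z w, arc x y -> arc z w ->
          ~~ [disjoint f x & f w] -> [disjoint f y & f z])].

Definition ocolorable (V : finType) (arc : rel V) (b k : nat) : bool :=
  `[< exists f : V -> {set 'I_k}, is_bfold_ocoloring arc b f >].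

(* chi^b_o(G): the least k admitting a b-fold oriented k-coloring
   (defaults to 0 if none exists, which never happens for oriented graphs). *)
Definition bfold_ochi (V : finType) (arc : rel V) (b : nat) : nat :=
  match pselect (exists k, ocolorable arc b k) with
  | left h => ex_minn h
  | right _ => 0%N
  end.

Definition frac_ochi (R : realType) (V : finType) (arc : rel V) : R :=
  inf [set ((bfold_ochi arc b)%:R / b%:R)%R | b in [set b : nat | (0 < b)%N]]%classic.

(* Its vertex set is the set of all m-subsets of 'I_n. *)
Definition consistent_suborientation (n m : nat) (A : rel {set 'I_n}) : Prop :=
  [/\ (forall x y, A x y -> #|x| = m /\ #|y| = m),
      (forall x y, A x y -> [disjoint x & y]),
      oriented A &
      (forall x y w z, A x y -> A w z -> ~~ [disjoint x & z] -> [disjoint y & w])].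

Definition kneser_hom (V : finType) (arc : rel V) (n m : nat)
  (A : rel {set 'I_n}) (g : V -> {set 'I_n}) : Prop :=
  (forall x, #|g x| = m) /\ (forall x y, arc x y -> A (g x) (g y)).

(* Main.v *)
Require Import Defs.
From HB Require Import structures.
From mathcomp Require Import all_boot all_order all_algebra.
From mathcomp Require Import boolp classical_sets reals.
From mathcomp Require Import ring lra.
Set Implicit Arguments. Unset Strict Implicit. Unset Printing Implicit Defensive.
Import Order.TTheory GRing.Theory Num.Theory.

Local Open Scope ring_scope.

Section FM.
Variables (F : realFieldType) (I : finType).
Notation cstr := ({ffun I -> F} * F)%type.
Implicit Types (c : {ffun I -> F}) (x : I -> F) (j : I) (y : F) (p n : cstr) (L : seq cstr).

Definition eval (c : {ffun I -> F}) (x : I -> F) := \sum_i c i * x i.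
Definition holdsb (x : I -> F) (p : cstr) : bool := p.2 <= eval p.1 x.
Definition upd (x : I -> F) (j : I) (y : F) := fun i => if i == j then y else x i.
Definition comb (j : I) (p n : cstr) : cstr :=
  ([ffun i => - n.1 j * p.1 i + p.1 j * n.1 i], - n.1 j * p.2 + p.1 j * n.2).
Definition fm (j : I) (L : seq cstr) : seq cstr :=
  [seq p <- L | (p : cstr).1 j == 0] ++
  [seq comb j p n | p <- [seq p <- L | 0 < (p : cstr).1 j], n <- [seq n <- L | (n : cstr).1 j < 0]].

Lemma eval_upd c x j y : eval c (upd x j y) = eval c (upd x j 0) + c j * y.
Proof.
rewrite /eval (bigD1 j) //= [in RHS](bigD1 j) //= /upd !eqxx mulr0 add0r addrC.
congr (_ + _); apply: eq_bigr => i /negbTE ->; done.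
Qed.

Lemma upd_id x j : upd x j (x j) = x.
Proof. by apply: boolp.funext => i; rewrite /upd; case: eqP => // ->. Qed.

Lemma upd_upd x j y z : upd (upd x j y) j z = upd x j z.
Proof. by apply: boolp.funext => i; rewrite /upd; case: eqP. Qed.

Lemma eval_indep c x j y : c j = 0 -> eval c (upd x j y) = eval c x.
Proof.
move=> cj; have := eval_upd c x j (x j); rewrite upd_id => ->.
by rewrite eval_upd cj !mul0r.
Qed.

Lemma eval_comb j p n x :
  eval (comb j p n).1 x = - n.1 j * eval p.1 x + p.1 j * eval n.1 x.
Proof.
rewrite /eval !mulr_sumr -big_split; apply: eq_bigr => i _ /=.
rewrite ffunE; ring.
Qed.

Lemma ex_between (ls us : seq F) :
  (forall l u, l \in ls -> u \in us -> l <= u) ->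
  exists y, (forall l, l \in ls -> l <= y) /\ (forall u, u \in us -> y <= u).
Proof.
elim: ls => [|l ls IH] H.
  elim: us {H} => [|u us IH]; first by exists 0.
  case: IH => y [_ Hy]; exists (Order.min y u); split => // v.
  rewrite inE => /orP[/eqP ->|/Hy]; first by rewrite ge_min lexx orbT.
  by move=> yv; rewrite ge_min yv.
case: IH => [l' u l'in uin|y [Hl Hu]]; first by apply: H => //; rewrite inE l'in orbT.
exists (Order.max l y); split.
  move=> l'; rewrite inE => /orP[/eqP ->|/Hl]; first by rewrite le_max lexx.
  by move=> h; rewrite le_max h orbT.
move=> u uin; rewrite ge_max Hu // andbT; apply: H => //; exact: mem_head.
Qed.

Lemma fm_correct j L x :
  (exists y, all (holdsb (upd x j y)) L) <-> all (holdsb x) (fm j L).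
Proof.
split.
  case=> y /allP H; apply/allP => q; rewrite mem_cat => /orP[].
    rewrite mem_filter => /andP[/eqP qj qL]; have := H _ qL.
    by rewrite /holdsb eval_indep.
  case/allpairsP => -[p n] /= [pin nin ->].
  move: pin nin; rewrite !mem_filter => /andP[pj pL] /andP[nj nL].
  have hp := H _ pL; have hn := H _ nL; move: hp hn.
  rewrite /holdsb -(@eval_indep (comb j p n).1 x j y); last first.
    by rewrite ffunE; ring.
  rewrite eval_comb /= => hp hn.
  apply: lerD; apply: ler_wpM2l => //; [rewrite oppr_ge0|]; exact: ltW.
move=> /allP H.
pose r (p : cstr) := eval p.1 (upd x j 0).
pose ls := [seq (p.2 - r p) / p.1 j | p <- [seq p <- L | 0 < (p : cstr).1 j]].
pose us := [seq (n.2 - r n) / n.1 j | n <- [seq n <- L | (n : cstr).1 j < 0]].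
have [y [Hl Hu]] : exists y, (forall l, l \in ls -> l <= y) /\ (forall u, u \in us -> y <= u).
  apply: ex_between => l u /mapP[p pin ->] /mapP[n nin ->].
  have := H (comb j p n); rewrite mem_cat; move/(_ (introT orP (or_intror _))).
  have -> : comb j p n \in [seq comb j p n | p <- [seq p <- L | 0 < (p : cstr).1 j], n <- [seq n <- L | (n : cstr).1 j < 0]].
    by apply/allpairsP; exists (p, n).
  move/(_ isT); rewrite /holdsb eval_comb /=.
  move: pin nin; rewrite !mem_filter => /andP[pj _] /andP[nj _].
  rewrite -(upd_id x j) eval_upd (eval_upd n.1) -/(r p) -/(r n) => h.
  rewrite ler_pdivrMr //.
  have nj0 : n.1 j != 0 by rewrite ltr0_neq0.
  have hu : (n.2 - r n) / n.1 j * n.1 j = n.2 - r n by rewrite divfK.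
  move: hu; set uu := _ / _ => hu. nra.
exists y; apply/allP => p pL.
case: (ltgtP (p.1 j) 0) => pj; last first.
  have := H p; rewrite mem_cat mem_filter pj eqxx pL /= => /(_ isT).
  by rewrite /holdsb (@eval_indep p.1 x j y pj).
all: rewrite /holdsb eval_upd -/(r p).
- have := Hl ((p.2 - r p) / p.1 j); rewrite ler_pdivrMr //.
  move/(_ (map_f _ _)); rewrite mem_filter pj pL => /(_ isT) h; lra.
- have := Hu ((p.2 - r p) / p.1 j); rewrite ler_ndivlMr //.
  move/(_ (map_f _ _)); rewrite mem_filter pj pL => /(_ isT) h; lra.
Qed.

Definition fm_all (js : seq I) L := foldl (fun L j => fm j L) L js.

Lemma fm_all_correct js L x :
  (exists x', (forall i, i \notin js -> x' i = x i) /\ all (holdsb x') L) <->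
  all (holdsb x) (fm_all js L).
Proof.
elim: js L x => [|j js IH] L x /=.
  split; last by move=> h; exists x.
  case=> x' [h1 h2]; have -> : x = x' by apply: boolp.funext => i; rewrite h1.
  done.
rewrite -IH; split.
  case=> x' [h1 h2]; exists (upd x' j (x j)); split.
    move=> i ni; rewrite /upd; case: eqP => [->|/eqP ij] //; apply: h1.
    by rewrite inE negb_or ij.
  apply/fm_correct; exists (x' j); by rewrite upd_upd upd_id.
case=> x'' [h1 /fm_correct [y h2]]; exists (upd x'' j y); split => // i.
rewrite inE negb_or /upd => /andP[/negbTE -> ni]; exact: h1.
Qed.
End FM.
Local Close Scope ring_scope.
Lemma mydisjointP (T : finType) (A B : {set T}) :
  reflect (forall x, x \in A -> x \in B -> False) [disjoint A & B].
Proof.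
apply: (iffP pred0P) => [h x xA xB|h x /=].
  by have := h x; rewrite /= xA xB.
by apply/negP => /andP[]; exact: h.
Qed.

Section Real.
Variables (V : finType) (arc : rel V).

Notation fset0 := (@finset.set0 V).
Definition compat (Q : {set V} -> Prop) :=
  forall S S', Q S -> Q S' -> forall x y z w, x \in S -> y \in S' -> z \in S' -> w \in S ->
    arc x y -> arc z w -> False.

Definition realize N (s : seq {set V}) (v : V) : {set 'I_N} :=
  [set i : 'I_N | v \in nth fset0 s i].

Lemma realize_mem N s v (i : 'I_N) : i \in realize N s v -> nth fset0 s i \in s /\ v \in nth fset0 s i.
Proof.
rewrite inE => h; split => //; apply: mem_nth.
by case: (ltnP i (size s)) => // hi; rewrite nth_default // inE in h.
Qed.

Lemma realize_cons Q N s u v u' v' : compat Q -> (forall S, S \in s -> Q S) ->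
  arc u v -> arc u' v' -> ~~ [disjoint realize N s u & realize N s v'] ->
  [disjoint realize N s v & realize N s u'].
Proof.
move=> cQ sQ a1 a2 nd; apply/mydisjointP => j jv ju'.
move/negP: nd; apply; apply/mydisjointP => i iu iv'.
case/realize_mem: iu => Si uS; case/realize_mem: iv' => _ v'S.
case/realize_mem: jv => Sj vS; case/realize_mem: ju' => _ u'S.
exact: (cQ _ _ (sQ _ Si) (sQ _ Sj) u v u' v' uS vS u'S v'S a1 a2).
Qed.

Lemma sum_nth_count (P : pred {set V}) s N : ~~ P fset0 -> size s <= N ->
  \sum_(i < N) P (nth fset0 s i) = count P s.
Proof.
move=> P0; elim: s N => [|S s IH] N hs.
  by rewrite big1 // => i _; rewrite nth_nil (negbTE P0).
case: N hs => [//|N] hs.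
by rewrite big_ord_recl /= IH.
Qed.

Lemma card_realize N s v : size s <= N -> #|realize N s v| = count (fun S : {set V} => v \in S) s.
Proof.
move=> hs; rewrite -(@sum_nth_count (fun S : {set V} => v \in S) s N) ?inE //.
rewrite -sum1_card big_mkcond /=; apply: eq_bigr => i _; rewrite inE.
by case: (v \in _).
Qed.

Lemma realize_coloring Q s b : compat Q -> (forall S, S \in s -> Q S) ->
  (forall v, count (fun S : {set V} => v \in S) s = b) ->
  is_bfold_ocoloring arc b (realize (size s) s).
Proof.
move=> cQ sQ hc; split.
- by move=> x; rewrite card_realize.
- move=> x y a; apply/negPn/negP => nd.
  have := realize_cons cQ sQ a a nd; rewrite disjoint_sym => h.
  by rewrite h in nd.
- move=> x y z w a1 a2; exact: realize_cons cQ sQ a1 a2.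
Qed.

End Real.
Local Open Scope ring_scope.
Lemma sum_option (R : nmodType) (T : finType) (f : option T -> R) :
  \sum_i f i = f None + \sum_j f (Some j).
Proof.
have -> : f None + \sum_j f (Some j) = \sum_(i <- None :: map Some (index_enum T)) f i.
  by rewrite big_cons big_map.
apply: perm_big; apply: uniq_perm.
- exact: index_enum_uniq.
- rewrite /= map_inj_uniq ?index_enum_uniq //; last by move=> ? ? [].
  by rewrite andbT; apply/mapP => -[].
- case=> [j|]; rewrite mem_index_enum ?inE //=.
  by rewrite (map_f Some) ?mem_index_enum ?orbT.
Qed.

Lemma memE (T : finType) (x : T) : x \in Finite.enum T.
Proof. by rewrite -enumT mem_enum. Qed.

Section LP.
Variables (V : finType) (arc : rel V).
Notation I := (option {set V}).
Notation cstr := ({ffun I -> rat} * rat)%type.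

Definition eS (S : {set V}) : {ffun I -> rat} := [ffun i : I => (i == Some S)%:R].
Definition nS (S : {set V}) : {ffun I -> rat} := [ffun i : I => - (i == Some S)%:R].
Definition covf (v : V) (i : I) : rat := if i is Some X then (v \in X)%:R else 0.
Definition objf (i : I) : rat := if i is Some _ then -1 else 1.
Definition cov (v : V) : {ffun I -> rat} := [ffun i => covf v i].
Definition ncov (v : V) : {ffun I -> rat} := [ffun i => - covf v i].
Definition obj : {ffun I -> rat} := [ffun i => objf i].

Definition LP (C : {set {set V}}) : seq cstr :=
  [seq (eS X, 0) | X <- enum {set V}] ++ [seq (nS X, 0) | X <- enum (~: C)] ++
  [seq (cov v, 1) | v <- enum V] ++ [seq (ncov v, -1) | v <- enum V] ++ [:: (obj, 0)].

Lemma eval_eS S x : eval (eS S) x = x (Some S).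
Proof.
rewrite /eval sum_option ffunE mul0r add0r (bigD1 S) //= ffunE eqxx mul1r big1 ?addr0 //.
by move=> T TS; rewrite ffunE; case: eqP => [[e]|_]; [rewrite e eqxx in TS | rewrite mul0r].
Qed.

Lemma eval_nS S x : eval (nS S) x = - x (Some S).
Proof.
rewrite /eval sum_option ffunE oppr0 mul0r add0r (bigD1 S) //= ffunE eqxx mulN1r big1 ?addr0 //.
by move=> T TS; rewrite ffunE; case: eqP => [[e]|_]; [rewrite e eqxx in TS | rewrite oppr0 mul0r].
Qed.

Lemma eval_cov v x : eval (cov v) x = \sum_(S : {set V} | v \in S) x (Some S).
Proof.
rewrite /eval sum_option ffunE mul0r add0r [RHS]big_mkcond /=.
by apply: eq_bigr => S _; rewrite ffunE /covf; case: (v \in S); rewrite ?mul1r ?mul0r.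
Qed.

Lemma eval_ncov v x : eval (ncov v) x = - \sum_(S : {set V} | v \in S) x (Some S).
Proof.
rewrite /eval sum_option ffunE mul0r add0r [X in - X]big_mkcond /= -sumrN.
by apply: eq_bigr => S _; rewrite ffunE /covf; case: (v \in S); rewrite ?mulN1r ?mul0r ?oppr0.
Qed.

Lemma eval_obj x : eval obj x = x None - \sum_(S : {set V}) x (Some S).
Proof.
rewrite /eval sum_option ffunE mul1r -sumrN; congr (_ + _).
by apply: eq_bigr => S _; rewrite ffunE /objf mulN1r.
Qed.

Definition LPprop (C : {set {set V}}) (x : I -> rat) :=
  [/\ forall S, 0 <= x (Some S), forall S, S \notin C -> x (Some S) <= 0,
      forall v, \sum_(S : {set V} | v \in S) x (Some S) = 1 & \sum_(S : {set V}) x (Some S) <= x None].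

Lemma LP_iff C x : all (holdsb x) (LP C) <-> LPprop C x.
Proof.
rewrite /LP !all_cat !all_map /= andbT /holdsb /=.
split.
- case/and5P => /allP h1 /allP h2 /allP h3 /allP h4 h5; split.
  + by move=> S; have := h1 S; rewrite memE => /(_ isT) /=; rewrite eval_eS.
  + by move=> S SC; have := h2 S; rewrite mem_enum inE SC => /(_ isT) /=; rewrite eval_nS oppr_ge0.
  + move=> v; have := h3 v; have := h4 v; rewrite ?memE ?mem_enum.
    move=> /(_ isT) /= a /(_ isT) /= b; rewrite eval_ncov lerN2 in a; rewrite eval_cov in b.
    by apply/eqP; rewrite eq_le a b.
  + by move: h5; rewrite eval_obj subr_ge0.
- case=> h1 h2 h3 h4; apply/and5P; split.
  + by apply/allP => S _ /=; rewrite eval_eS.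
  + by apply/allP => S; rewrite mem_enum inE => SC /=; rewrite eval_nS oppr_ge0 h2.
  + by apply/allP => v _ /=; rewrite eval_cov h3.
  + by apply/allP => v _ /=; rewrite eval_ncov h3.
  + by rewrite eval_obj subr_ge0.
Qed.

Definition feasible C (z : rat) := exists x, x None = z /\ LPprop C x.

Lemma feasible_mono C z z' : z <= z' -> feasible C z -> feasible C z'.
Proof.
move=> zz [x [xN [h1 h2 h3 h4]]]; exists (upd x None z'); split.
  by rewrite /upd eqxx.
by split; rewrite /upd /= ?eqxx //; lra.
Qed.

Definition js : seq I := [seq Some X | X <- enum {set V}].
Definition xz (z : rat) : I -> rat := fun i => if i is None then z else 0.

Lemma feasible_fm C z : feasible C z <-> all (holdsb (xz z)) (fm_all js (LP C)).
Proof.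
rewrite -fm_all_correct; split.
- case=> x [xN /LP_iff h]; exists x; split => // -[S|] //.
  by rewrite /js (map_f (fun S => Some S)) // mem_enum.
- case=> x [h1 /LP_iff h2]; exists x; split => //; apply: h1.
  by apply/mapP => -[].
Qed.

Lemma eval_xz c z : eval c (xz z) = c None * z.
Proof. by rewrite /eval sum_option big1 ?addr0 // => S _; rewrite mulr0. Qed.

Lemma lim_closed (c d s : rat) :
  (forall m : nat, d <= c * (s + (m.+1%:R)^-1)) -> d <= c * s.
Proof.
move=> h; rewrite leNgt; apply/negP => lt.
case: (lerP c 0) => c0.
  have := h 0%N; rewrite invr1 mulrDr; lra.
have pos : 0 <= c / (d - c * s) by apply: divr_ge0; lra.
have := archi_boundP pos; set m := Num.Def.archi_bound _ => hm.
have := h m; rewrite mulrDr.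
have dpos : 0 < d - c * s by lra.
have M0 : 0 < m.+1%:R :> rat by rewrite ltr0n.
rewrite ltr_pdivrMr // in hm.
have hm' : c < (d - c * s) * m.+1%:R.
  apply: lt_le_trans hm _; rewrite mulrC; apply: ler_wpM2l; [exact: ltW | by rewrite ler_nat].
have : c / m.+1%:R < d - c * s by rewrite ltr_pdivrMr.
move: lt; generalize (c / m.+1%:R) => u; generalize (c * s) => cs; move=> *; lra.
Qed.

Lemma feasible_closed C s :
  (forall m : nat, feasible C (s + (m.+1%:R)^-1)) -> feasible C s.
Proof.
move=> h; apply/feasible_fm; apply/allP => p pin.
rewrite /holdsb eval_xz; apply: lim_closed => m.
have := h m; move/feasible_fm/allP/(_ p pin); by rewrite /holdsb eval_xz.
Qed.

End LP.

Lemma pigeon (T : finType) (P : nat -> T -> Prop) :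
  (forall m, exists t, P m t) -> (forall m m' t, (m <= m')%N -> P m' t -> P m t) ->
  exists t, forall m, P m t.
Proof.
move=> h mono; apply: contrapT => nex.
have H : forall t, exists m, ~ P m t.
  move=> t; apply/existsNP => allm; apply: nex; by exists t.
have : forall l : seq T, exists M, forall t, t \in l -> ~ P M t.
  elim=> [|t l [M1 HM1]]; first by exists 0%N.
  case: (H t) => mt Hmt; exists (maxn M1 mt) => t'; rewrite inE => /orP[/eqP ->|tl] Pt.
    by apply: Hmt; apply: mono Pt; rewrite leq_maxr.
  by apply: (HM1 t' tl); apply: mono Pt; rewrite leq_maxl.
case/(_ (enum T)) => M HM; case: (h M) => t Pt; apply: (HM t) => //.
by rewrite mem_enum.
Qed.

Section Main.
Variables (V : finType) (arc : rel V).

Lemma count_part (k : nat) (g : 'I_k -> {set V}) (P : pred {set V}) :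
  (\sum_(S | P S) #|[set j | g j == S]| = #|[set j | P (g j)]|)%N.
Proof.
rewrite -sum1dep_card (partition_big g P) //=; apply: eq_bigr => S PS.
rewrite -sum1dep_card; apply: eq_bigl => j.
by case: eqP => [->|]; rewrite ?PS ?andbF ?andbT.
Qed.

Lemma coloring_feasible b' k (f : V -> {set 'I_k}) : (0 < b')%N ->
  is_bfold_ocoloring arc b' f ->
  let C := [set [set v | i \in f v] | i : 'I_k] in
  compat arc (fun S => S \in C) /\ feasible C (k%:R / b'%:R).
Proof.
move=> b0 [hs hd hc] C; split.
  move=> S S' /imsetP[i _ ->] /imsetP[j _ ->] x y z w; rewrite !inE => xi yj zj wi a1 a2.
  have := hc x y z w a1 a2; rewrite -[~~ _]/(~~ [disjoint f x & f w]).
  have nd : ~~ [disjoint f x & f w].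
    by apply/negP => /mydisjointP /(_ i xi wi).
  by move/(_ nd)/mydisjointP/(_ j yj zj).
pose g (j : 'I_k) := [set v | j \in f v].
exists (fun o => if o is Some X then #|[set j | g j == X]|%:R / b'%:R else k%:R / b'%:R).
split => //; split.
- by move=> S; rewrite divr_ge0 ?ler0n.
- move=> S SC; suff -> : [set j | g j == S] = finset.set0 by rewrite cards0 mul0r.
  apply/setP => j; rewrite !inE; apply/negP => /eqP e; move: SC.
  by rewrite -e; case/negP; apply: imset_f.
- move=> v; rewrite -mulr_suml -natr_sum count_part.
  have -> : [set j | v \in g j] = f v by apply/setP => j; rewrite !inE.
  by rewrite hs divff // pnatr_eq0 -lt0n.
- rewrite -mulr_suml -natr_sum.
  have := count_part g predT; rewrite /= => ->.
  by rewrite (eq_card (B := 'I_k)) ?card_ord // => j; rewrite inE.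
Qed.

Lemma sumn_enum (T : finType) (F : T -> nat) :
  sumn [seq F x | x <- enum T] = (\sum_x F x)%N.
Proof. by rewrite sumnE big_map big_enum; apply: eq_bigl => x; rewrite inE. Qed.

Lemma ochi_colorable b' : oriented arc -> (0 < b')%N -> ocolorable arc b' (bfold_ochi arc b').
Proof.
move=> [Hl Ha] b0.
have ex : exists k, ocolorable arc b' k.
  pose s := flatten [seq nseq b' [set v] | v <- enum V].
  exists (size s); apply/asboolP; exists (realize (size s) s).
  apply: (@realize_coloring _ _ (fun S => exists v, S = [set v])).
  - move=> S S' [p ->] [q ->] x y z w; rewrite !inE => /eqP -> /eqP -> /eqP -> /eqP ->.
    by move=> a1 a2; move: (Ha _ _ a1); rewrite a2.
  - move=> S /flatten_mapP [v _]; rewrite mem_nseq => /andP[_ /eqP ->]; by exists v.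
  - move=> v; rewrite count_flatten -map_comp.
    rewrite (eq_map (g := fun w => (v \in [set w]) * b')%N); last first.
      by move=> w /=; rewrite count_nseq.
    rewrite sumn_enum (bigD1 v) //= big1 ?inE ?eqxx ?mul1n ?addn0 // => w wv.
    by rewrite inE eq_sym (negbTE wv).
rewrite /bfold_ochi; case: pselect => [h|//]; by case: ex_minnP.
Qed.

Lemma ochi_le b' k : ocolorable arc b' k -> (bfold_ochi arc b' <= k)%N.
Proof.
move=> hk; rewrite /bfold_ochi; case: pselect => [h|nh]; last by exfalso; apply: nh; exists k.
by case: ex_minnP => m _ /(_ k hk).
Qed.

Lemma realize_disj Q N s u v : compat arc Q -> (forall S, S \in s -> Q S) ->
  arc u v -> [disjoint realize N s u & realize N s v].
Proof.
move=> cQ sQ a; apply/negPn/negP => nd.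
have := realize_cons cQ sQ a a nd; rewrite disjoint_sym => h.
by rewrite h in nd.
Qed.

Lemma ndisj_self (T : finType) (X : {set T}) : (0 < #|X|)%N -> ~~ [disjoint X & X].
Proof.
rewrite card_gt0 => /set0Pn [x xX]; apply/negP => /mydisjointP /(_ x xX xX); done.
Qed.

Lemma kneser_of_seq (N m : nat) (s : seq {set V}) (Q : {set V} -> Prop) :
  compat arc Q -> (forall S, S \in s -> Q S) -> (size s <= N)%N -> (0 < m)%N ->
  (forall v, count (fun S : {set V} => v \in S) s = m) ->
  exists A : rel {set 'I_N},
    consistent_suborientation m A /\ exists g : V -> {set 'I_N}, kneser_hom arc m A g.
Proof.
move=> cQ sQ hs m0 hc.
pose g := realize N s.
have gc v : #|g v| = m by rewrite card_realize.
pose A := fun X Y : {set 'I_N} => [exists u, [exists v, [&& arc u v, g u == X & g v == Y]]].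
have AP X Y : A X Y -> exists u v, [/\ arc u v, g u = X & g v = Y].
  by case/existsP => u /existsP [v /and3P[a /eqP e1 /eqP e2]]; exists u, v.
exists A; split; last first.
  exists g; split => // x y a; apply/existsP; exists x; apply/existsP; exists y.
  by rewrite a !eqxx.
have ndg v : ~~ [disjoint g v & g v] by apply: ndisj_self; rewrite gc.
split.
- by move=> X Y /AP [u [v [_ <- <-]]].
- by move=> X Y /AP [u [v [a <- <-]]]; exact: realize_disj cQ sQ a.
- split.
    move=> X; apply/negP => /AP [u [v [a e1 e2]]].
    have h : [disjoint g u & g v] := realize_disj N cQ sQ a.
    move: h; rewrite e1 -e2 => h.
    by move: (ndg v); rewrite h.
  move=> X Y /AP [u [v [a e1 e2]]]; apply/negP => /AP [u' [v' [a' e1' e2']]].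
  have nd : ~~ [disjoint g u & g v'] by rewrite e1 -e2'; exact: ndg.
  have h : [disjoint g v & g u'] := realize_cons cQ sQ a a' nd.
  move: h; rewrite e2 -e1' => h.
  by move: (ndg u'); rewrite h.
- move=> X Y W Z /AP [u [v [a <- <-]]] /AP [u' [v' [a' <- <-]]].
  exact: realize_cons cQ sQ a a'.
Qed.

Lemma feasible_kneser (C : {set {set V}}) (a b : nat) : (0 < a)%N -> (0 < b)%N ->
  compat arc (fun S => S \in C) -> feasible C (a%:R / b%:R) ->
  exists c : nat, (0 < c)%N /\
    exists A : rel {set 'I_(a * c)},
      consistent_suborientation (b * c) A /\
      exists g : V -> {set 'I_(a * c)}, kneser_hom arc (b * c) A g.
Proof.
move=> a0 b0 cC [x [xN [h1 h2 h3 h4]]].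
pose t S := x (Some S).
pose q := (\prod_(S : {set V}) `|denq (t S)|)%N.
have q0 : (0 < q)%N by apply: prodn_gt0 => S; rewrite absz_gt0 denq_neq0.
have : forall S, exists n : nat, t S * q%:R = n%:R.
  move=> S; exists (`|numq (t S)| * \prod_(S' | S' != S) `|denq (t S')|)%N.
  rewrite /q (bigD1 S) //= !natrM mulrA; congr (_ * _).
  rewrite !natr_absz gtr0_norm ?denq_gt0 // ger0_norm ?numq_ge0 ?h1 //.
  by rewrite -numqE.
case/choice => n hn.
pose s := flatten [seq nseq (b * n X) X | X <- enum {set V}].
have sumP (P : pred {set V}) :
    (\sum_(S | P S) n S)%:R = q%:R * \sum_(S | P S) t S :> rat.
  by rewrite natr_sum mulr_sumr; apply: eq_bigr => S _; rewrite -hn mulrC.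
have cnt (P : pred {set V}) :
    count P s = (b * \sum_(S | P S) n S)%N.
  rewrite count_flatten -map_comp.
  rewrite (eq_map (g := fun S => (P S * (b * n S))%N)); last first.
    by move=> S /=; rewrite count_nseq mulnC.
  rewrite sumn_enum big_distrr /= [RHS]big_mkcond /=; apply: eq_bigr => S _.
  by case: (P S); rewrite ?mul1n ?mul0n ?muln0.
have sz : (size s <= a * q)%N.
  have -> : size s = count predT s by rewrite count_predT.
  rewrite cnt -(ler_nat rat) natrM sumP.
  have : \sum_(S | predT S) t S <= a%:R / b%:R by rewrite -xN.
  rewrite natrM ler_pdivlMr ?ltr0n // => h.
  have hb : (0 : rat) < b%:R by rewrite ltr0n.
  have hq : (0 : rat) < q%:R by rewrite ltr0n.
  nra.
have hc v : count (fun S : {set V} => v \in S) s = (b * q)%N.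
  rewrite cnt; congr (_ * _)%N; apply/eqP; rewrite -(eqr_nat rat) sumP.
  by rewrite (h3 v) mulr1.
have sC S : S \in s -> S \in C.
  case/flatten_mapP => S' _; rewrite mem_nseq => /andP[nS /eqP ->].
  apply: contraT => nC; have t0 : t S' = 0.
    by apply/eqP; rewrite eq_le h2 // h1.
  by move: nS; rewrite muln_gt0 b0 /= lt0n -(eqr_nat rat) -hn t0 mul0r eqxx.
exists q; split => //.
apply: (kneser_of_seq cC sC sz _ hc); by rewrite muln_gt0 b0 q0.
Qed.

End Main.

Local Close Scope ring_scope.
Lemma ratr_frac (R : realType) (k b : nat) :
  ((k%:R / b%:R : R) = ratr (k%:R / b%:R : rat))%R.
Proof. by rewrite fmorph_div !rmorph_nat. Qed.
Unset Implicit Arguments.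

Theorem theorem1 (R : realType) (V : finType) (arc : rel V)
  (HG : oriented arc) (a b : nat) (ha : (0 < a)%N) (hb : (0 < b)%N) :
  (frac_ochi R arc <= (a%:R / b%:R : R))%R <->
  exists c : nat, (0 < c)%N /\
    exists A : rel {set 'I_(a * c)},
      consistent_suborientation (b * c) A /\
      exists g : V -> {set 'I_(a * c)}, kneser_hom arc (b * c) A g.
Proof.
rewrite /frac_ochi; set E := (X in inf X).
have En : (E !=set0)%classic by exists ((bfold_ochi arc 1)%:R / 1%:R)%R; exists 1%N.
have Elb : has_lbound E.
  by exists 0%R => _ [b' _ <-]; rewrite divr_ge0 ?ler0n.
split.
- move=> hinf.
  pose sq : rat := (a%:R / b%:R)%R.
  have step : forall m : nat, exists C : {set {set V}},
      compat arc (fun S => S \in C) /\ feasible C (sq + (m.+1%:R)^-1)%R.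
    move=> m.
    have : (inf E < ratr (sq + (m.+1%:R)^-1))%R.
      apply: le_lt_trans hinf _; rewrite ratr_frac ltr_rat ltrDl invr_gt0 ltr0n //.
    case/(inf_lt En) => _ [b' b0 <-]; rewrite ratr_frac ltr_rat => hlt.
    have := ochi_colorable HG b0 => /asboolP [f hf].
    have [cC fC] := coloring_feasible b0 hf.
    eexists; split; first exact: cC.
    by apply: feasible_mono fC; apply: ltW.
  have mono : forall m m' (C : {set {set V}}), (m <= m')%N ->
      (compat arc (fun S => S \in C) /\ feasible C (sq + (m'.+1%:R)^-1)%R) ->
      (compat arc (fun S => S \in C) /\ feasible C (sq + (m.+1%:R)^-1)%R).
    move=> m m' C le [cC fC]; split => //; apply: feasible_mono fC.
    by rewrite lerD2l lef_pV2 ?posrE ?ltr0n // ler_nat ltnS.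
  have [C HC] := pigeon step mono.
  have cC := (HC 0%N).1.
  have fC : feasible C sq := feasible_closed (fun m => (HC m).2).
  exact: feasible_kneser ha hb cC fC.
- case=> c [c0 [A [[hs hd [Hl Ha] hc] [g [gs gh]]]]].
  have col : ocolorable arc (b * c) (a * c).
    apply/asboolP; exists g; split => //.
    - by move=> x y a'; apply: hd; apply: gh.
    - by move=> x y z w a1 a2; apply: hc; apply: gh.
  have le := ochi_le col.
  have bc0 : (0 < b * c)%N by rewrite muln_gt0 hb c0.
  apply: le_trans (ge_inf Elb _) _.
    by exists (b * c)%N.
  apply: (@le_trans _ _ ((a * c)%:R / (b * c)%:R)%R).
    by rewrite ler_pM2r ?invr_gt0 ?ltr0n // ler_nat.
  rewrite !natrM -mulf_div divff ?mulr1 // pnatr_eq0 -lt0n //.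
Qed.
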